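(* For every prime power $q$, the number $I_{\mathrm{H}}(q)$ of $\mathbb{F}_q$-isomorphism classes of Hessian curves over $\mathbb{F}_q$ is $\lfloor (q+11)/12\rfloor$ if $q\equiv1\pmod3$, and $q-1$ if $q\equiv0,2\pmod3$.
   Context: For $u\in\mathbb{F}_q$ with $u^3\ne27$, the Hessian curve $E_{\mathrm{H},u}$ is the elliptic curve $X^3+Y^3+1=uXY$. Two such curves are $\mathbb{F}_q$-isomorphic if they are birationally equivalent over $\mathbb{F}_q$ (equivalently, their Weierstrass models are isomorphic via a Weierstrass change of variables with coefficients in $\mathbb{F}_q$). $I_{\mathrm{H}}(q)$ is the number of equivalence classes of $\{E_{\mathrm{H},u}: u\in\mathbb{F}_q,\ u^3\ne27\}$ under $\mathbb{F}_q$-isomorphism. *)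

(* Defs.v *)
From HB Require Import structures.
From mathcomp Require Import all_boot all_order all_algebra all_field.
Set Implicit Arguments. Unset Strict Implicit. Unset Printing Implicit Defensive.
Import GRing.Theory.
Local Open Scope ring_scope.

(* Two long Weierstrass equations
     y^2 + a1 xy + a3 y = x^3 + a2 x^2 + a4 x + a6
   over F are F-isomorphic iff there is an admissible change of variables
   x = w^2 x' + r, y = w^3 y' + w^2 s x' + t with w <> 0 and r, s, t in F
   carrying the first to the second (Silverman, AEC, Table 3.1). *)
Definition weier_iso (F : finFieldType) (a1 a2 a3 a4 a6 b1 b2 b3 b4 b6 : F) : bool :=
  [exists w : F, exists r : F, exists s : F, exists t : F,
    [&& w != 0,
        w * b1 == a1 + 2 * s,
        w ^+ 2 * b2 == a2 - s * a1 + 3 * r - s ^+ 2,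
        w ^+ 3 * b3 == a3 + r * a1 + 2 * t,
        w ^+ 4 * b4 == a4 - s * a3 + 2 * r * a2 - (t + r * s) * a1
                        + 3 * r ^+ 2 - 2 * s * t &
        w ^+ 6 * b6 == a6 + r * a4 + r ^+ 2 * a2 + r ^+ 3 - t * a3
                        - t ^+ 2 - r * t * a1]].

(* Weierstrass model of the Hessian curve X^3 + Y^3 + 1 = u X Y (valid in every
   characteristic, u^3 <> 27):  y^2 + (u+6) x y + (u^2+3u+9) y = x^3.
   It is obtained from the projective linear change of coordinates
     x = X+Y+Z, y = uX+3Y+3Z, z = 3X+3Y+uZ
   (determinant -(u-3)^2, nonzero when u^3 <> 27), using the identity
     (u-3)^2 (X^3+Y^3+Z^3-uXYZ) = (u^2+3u+9) x^3 + y^2 z - (u+6) xyz + y z^2,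
   followed by a scaling of coordinates. *)
Definition hess_a1 (F : finFieldType) (u : F) : F := u + 6.
Definition hess_a3 (F : finFieldType) (u : F) : F := u ^+ 2 + 3 * u + 9.

Definition hess_iso (F : finFieldType) (u v : F) : bool :=
  weier_iso (hess_a1 u) 0 (hess_a3 u) 0 0 (hess_a1 v) 0 (hess_a3 v) 0 0.

Definition hess_params (F : finFieldType) : {set F} := [set u : F | u ^+ 3 != 27].

Definition I_H (F : finFieldType) : nat :=
  #|[set [set v in hess_params F | hess_iso u v] | u in hess_params F]|.

(* Main.v *)
Require Import Defs.
From HB Require Import structures.
From mathcomp Require Import all_boot all_order all_algebra all_field all_fingroup all_solvable.
From mathcomp Require Import ring zify.
Set Implicit Arguments. Unset Strict Implicit. Unset Printing Implicit Defensive.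
Import GRing.Theory FinRing.Theory.
Local Open Scope ring_scope.

Section Gen.
Variable F : finFieldType.

Definition WE (a1 a2 a3 a4 a6 b1 b2 b3 b4 b6 w r s t : F) : Prop :=
  [/\ w * b1 = a1 + 2 * s,
        w ^+ 2 * b2 = a2 - s * a1 + 3 * r - s ^+ 2,
        w ^+ 3 * b3 = a3 + r * a1 + 2 * t,
        w ^+ 4 * b4 = a4 - s * a3 + 2 * r * a2 - (t + r * s) * a1
                        + 3 * r ^+ 2 - 2 * s * t &
        w ^+ 6 * b6 = a6 + r * a4 + r ^+ 2 * a2 + r ^+ 3 - t * a3
                        - t ^+ 2 - r * t * a1].

Lemma weierE (a1 a2 a3 a4 a6 b1 b2 b3 b4 b6 : F) :
  weier_iso a1 a2 a3 a4 a6 b1 b2 b3 b4 b6 ->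
  exists w r s t, w != 0 /\ WE a1 a2 a3 a4 a6 b1 b2 b3 b4 b6 w r s t.
Proof.
case/existsP=> w /existsP [r /existsP [s /existsP [t]]].
case/andP=> hw /and5P [/eqP e1 /eqP e2 /eqP e3 /eqP e4 /eqP e6].
by exists w, r, s, t; split.
Qed.

Lemma weierI (a1 a2 a3 a4 a6 b1 b2 b3 b4 b6 w r s t : F) :
  w != 0 -> WE a1 a2 a3 a4 a6 b1 b2 b3 b4 b6 w r s t ->
  weier_iso a1 a2 a3 a4 a6 b1 b2 b3 b4 b6.
Proof.
move=> hw [e1 e2 e3 e4 e6].
apply/existsP; exists w; apply/existsP; exists r; apply/existsP; exists s.
apply/existsP; exists t.
by rewrite hw e1 e2 e3 e4 e6 !eqxx.
Qed.

Lemma weier_trans (a1 a2 a3 a4 a6 b1 b2 b3 b4 b6 c1 c2 c3 c4 c6 : F) :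
  weier_iso a1 a2 a3 a4 a6 b1 b2 b3 b4 b6 ->
  weier_iso b1 b2 b3 b4 b6 c1 c2 c3 c4 c6 ->
  weier_iso a1 a2 a3 a4 a6 c1 c2 c3 c4 c6.
Proof.
move=> /weierE [w1 [r1 [s1 [t1 [h1 [E1 E2 E3 E4 E6]]]]]].
move=> /weierE [w2 [r2 [s2 [t2 [h2 [G1 G2 G3 G4 G6]]]]]].
apply: (@weierI _ _ _ _ _ _ _ _ _ _ (w1*w2) (r1 + w1^+2*r2) (s1 + w1*s2)
   (t1 + w1^+3*t2 + s1*w1^+2*r2)); first by rewrite mulf_neq0.
have inv k x y : w1 ^+ k * x = y -> x = y / w1 ^+ k.
  by move=> <-; rewrite [_ * x]mulrC mulfK // expf_neq0.
have inv2 k x y : w2 ^+ k * x = y -> x = y / w2 ^+ k.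
  by move=> <-; rewrite [_ * x]mulrC mulfK // expf_neq0.
rewrite -(expr1 w1) in E1; rewrite -(expr1 w2) in G1.
move/inv: E1 => E1; move/inv: E2 => E2; move/inv: E3 => E3.
move/inv: E4 => E4; move/inv: E6 => E6.
move/inv2: G1 => G1; move/inv2: G2 => G2; move/inv2: G3 => G3.
move/inv2: G4 => G4; move/inv2: G6 => G6.
rewrite G1 G2 G3 G4 G6 E1 E2 E3 E4 E6.
split; field; by rewrite ?h1 ?h2.
Qed.
End Gen.

Section Hess.
Variable F : finFieldType.

Definition HE (u v w r s t : F) : Prop :=
  [/\ w * (v + 6) = (u + 6) + 2 * s,
      - s * (u + 6) + 3 * r - s ^+ 2 = 0,
      w ^+ 3 * (v ^+ 2 + 3 * v + 9) = (u ^+ 2 + 3 * u + 9) + r * (u + 6) + 2 * t,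
      - s * (u ^+ 2 + 3 * u + 9) - (t + r * s) * (u + 6) + 3 * r ^+ 2 - 2 * s * t = 0 &
      r ^+ 3 - t * (u ^+ 2 + 3 * u + 9) - t ^+ 2 - r * t * (u + 6) = 0].

Lemma hessE (u v : F) : hess_iso u v -> exists w r s t, w != 0 /\ HE u v w r s t.
Proof.
case/weierE=> w [r [s [t [hw [e1 e2 e3 e4 e6]]]]].
exists w, r, s, t; split=> //.
rewrite /hess_a1 /hess_a3 in e1 e2 e3 e4 e6.
rewrite !mulr0 in e2 e4 e6.
split.
- by rewrite e1.
- by rewrite e2; ring.
- by rewrite e3.
- by rewrite e4; ring.
- by rewrite e6; ring.
Qed.

Lemma eq_from0 (L R X : F) : R - L = X -> X = 0 -> L = R.
Proof. by move=> h e; apply/eqP; rewrite eq_sym -subr_eq0 h e. Qed.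

Lemma hessI (u v w r s t : F) : w != 0 -> HE u v w r s t -> hess_iso u v.
Proof.
move=> hw [e1 e2 e3 e4 e6]; apply: (weierI (r:=r) (s:=s) (t:=t) hw).
rewrite /hess_a1 /hess_a3; split.
- by rewrite e1.
- by apply: (eq_from0 _ e2); ring.
- by rewrite e3.
- by apply: (eq_from0 _ e4); ring.
- by apply: (eq_from0 _ e6); ring.
Qed.

Lemma hess_trans (u v x : F) : hess_iso u v -> hess_iso v x -> hess_iso u x.
Proof. exact: weier_trans. Qed.

Lemma hess_refl (u : F) : hess_iso u u.
Proof.
apply: (@hessI u u 1 0 0 0); first exact: oner_neq0.
by split; ring.
Qed.

Definition Dl (a1 a2 a3 a4 a6 : F) :=
  let b2 := a1^+2 + 4*a2 in let b4 := 2*a4 + a1*a3 in let b6 := a3^+2 + 4*a6 in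
  let b8 := a1^+2*a6 + 4*a2*a6 - a1*a3*a4 + a2*a3^+2 - a4^+2 in
  - b2^+2*b8 - 8*b4^+3 - 27*b6^+2 + 9*b2*b4*b6.
Definition C4l (a1 a2 a3 a4 a6 : F) :=
  let b2 := a1^+2 + 4*a2 in let b4 := 2*a4 + a1*a3 in b2^+2 - 24 * b4.

Lemma dinv (A B r s t : F) :
  Dl (A + 2*s) (- s*A + 3*r - s^+2) (B + r*A + 2*t)
     (- s*B - (t + r*s)*A + 3*r^+2 - 2*s*t) (r^+3 - t*B - t^+2 - r*t*A)
  = Dl A 0 B 0 0.
Proof. rewrite /Dl; ring. Qed.

Lemma c4inv (A B r s t : F) :
  C4l (A + 2*s) (- s*A + 3*r - s^+2) (B + r*A + 2*t)
     (- s*B - (t + r*s)*A + 3*r^+2 - 2*s*t) (r^+3 - t*B - t^+2 - r*t*A)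
  = C4l A 0 B 0 0.
Proof. rewrite /C4l; ring. Qed.

Definition rho (x : F) := x * (x ^+ 3 + 216) / (x ^+ 3 - 27).

Lemma iso_rho (u v : F) : u ^+ 3 != 27 -> v ^+ 3 != 27 ->
  hess_iso u v -> rho u ^+ 3 = rho v ^+ 3.
Proof.
move=> hu hv /hessE [w [r [s [t [hw [e1 e2 e3 e4 e6]]]]]].
have d := dinv (u + 6) (u ^+ 2 + 3 * u + 9) r s t.
have c := c4inv (u + 6) (u ^+ 2 + 3 * u + 9) r s t.
rewrite e2 e4 e6 -e1 -e3 in d c.
have d' : w ^+ 12 * (v ^+ 3 - 27) ^+ 3 = (u ^+ 3 - 27) ^+ 3.
  by rewrite [RHS](_ : _ = Dl (u + 6) 0 (u ^+ 2 + 3 * u + 9) 0 0);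
   [rewrite -d /Dl | rewrite /Dl]; ring.
have c' : w ^+ 4 * (v * (v ^+ 3 + 216)) = u * (u ^+ 3 + 216).
  by rewrite [RHS](_ : _ = C4l (u + 6) 0 (u ^+ 2 + 3 * u + 9) 0 0);
   [rewrite -c /C4l | rewrite /C4l]; ring.
have hu' : u ^+ 3 - 27 != 0 by rewrite subr_eq0.
have hv' : v ^+ 3 - 27 != 0 by rewrite subr_eq0.
rewrite /rho !expr_div_n; apply/eqP; rewrite eqr_div ?expf_neq0 //; apply/eqP.
have hw12 : w ^+ 12 != 0 by rewrite expf_neq0.
apply: (mulfI hw12).
rewrite -c' -d'; ring.
Qed.
End Hess.

Section NoZ.
Variable F : finFieldType.

Lemma noz2 (hz : forall z : F, z ^+ 2 + z + 1 != 0) (a b : F) :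
  b != 0 -> a ^+ 2 + a * b + b ^+ 2 != 0.
Proof.
move=> hb; apply: contra (hz (a / b)) => /eqP h; apply/eqP.
rewrite (_ : _ + _ + _ = (a ^+ 2 + a * b + b ^+ 2) / b ^+ 2); last by field.
by rewrite h mul0r.
Qed.

Lemma cube27 (hz : forall z : F, z ^+ 2 + z + 1 != 0) (u : F) :
  (u ^+ 3 == 27) = (u == 3).
Proof.
apply/eqP/eqP => [h | ->]; last by ring.
have h3 : (3 : F) != 0.
  apply: contra (hz 1) => /eqP h3.
  have -> : 1 ^+ 2 + 1 + 1 = 3 :> F by ring.
  by rewrite h3.
have: (u - 3) * (u ^+ 2 + u * 3 + 3 ^+ 2) = 0.
  by rewrite (_ : (u - 3) * _ = u ^+ 3 - 27); [rewrite h subrr | ring].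
move/eqP; rewrite mulf_eq0; case/orP => [/eqP|/eqP hq]; first by move/eqP; rewrite subr_eq0 => /eqP.
by move: (noz2 hz u h3); rewrite hq eqxx.
Qed.

Lemma scal (hz : forall z : F, z ^+ 2 + z + 1 != 0) (u v w : F) :
  u != 3 -> w * (v + 6) = u + 6 ->
  w ^+ 3 * (v ^+ 2 + 3 * v + 9) = u ^+ 2 + 3 * u + 9 -> v = u.
Proof.
move=> hu e1 e3.
have hu' : u = w * (v + 6) - 6 by rewrite e1; ring.
have : (1 - w) * (27 * w ^+ 2 + (27 - 9 * (u + 6)) * w + (u ^+ 2 + 3 * u + 9)) = 0.
  rewrite (_ : (1 - w) * _ = (u ^+ 2 + 3 * u + 9) - w ^+ 3 * (v ^+ 2 + 3 * v + 9)).
    by rewrite e3 subrr.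
  by rewrite hu'; ring.
move/eqP; rewrite mulf_eq0; case/orP => [|/eqP hq].
  rewrite subr_eq0 => /eqP hw; move: e1; rewrite -hw mul1r => /eqP.
  by rewrite (can_eq (addrK 6)) => /eqP.
have hu3 : u - 3 != 0 by rewrite subr_eq0.
have := noz2 hz (9 * w - 2 * u - 3) hu3.
rewrite (_ : _ + _ + _ = 3 * (27 * w ^+ 2 + (27 - 9 * (u + 6)) * w + (u ^+ 2 + 3 * u + 9))).
  by rewrite hq mulr0 eqxx.
ring.
Qed.

Lemma noz_iso (hz : forall z : F, z ^+ 2 + z + 1 != 0) (u v : F) :
  u ^+ 3 != 27 -> hess_iso u v -> v = u.
Proof.
move=> hu /hessE [w [r [s [t [hw [e1 e2 e3 e4 e6]]]]]].
have h3 : (3 : F) != 0.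
  apply: contra (hz 1) => /eqP h3.
  have -> : 1 ^+ 2 + 1 + 1 = 3 :> F by ring.
  by rewrite h3.
have hu3 : u != 3 by rewrite -(cube27 hz).
have hB : u ^+ 2 + 3 * u + 9 != 0.
  apply: contra hu => /eqP hB; apply/eqP.
  by rewrite (_ : u ^+ 3 = (u - 3) * (u ^+ 2 + 3 * u + 9) + 27); [rewrite hB mulr0 add0r | ring].
pose A := u + 6; pose B := u ^+ 2 + 3 * u + 9.
pose D := A + 2 * s; pose M := 3 * r ^+ 2 - s * B - r * s * A.
pose K := (u^+4 + 2*u^+3*r + 6*u^+3 + u^+2*r^+2 + 18*u^+2*r + 27*u^+2 + 12*u*r^+2
          + 54*u*r + 54*u + 4*r^+3 + 36*r^+2 + 108*r + 81).
have hT : r * (3 * r + B) * (r ^+ 2 + (3 * A - 9) * r + 3 * B) = 0.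
  rewrite (_ : r * _ * _ = (- s * (u + 6) + 3 * r - s ^+ 2) * K
     + D ^+ 2 * (r ^+ 3 - t * (u ^+ 2 + 3 * u + 9) - t ^+ 2 - r * t * (u + 6))
     - (- s * (u ^+ 2 + 3 * u + 9) - (t + r * s) * (u + 6) + 3 * r ^+ 2 - 2 * s * t)
       * (M + t * D + (r * A + B) * D)).
    by rewrite e2 e4 e6; ring.
  rewrite /K /D /M /A /B; ring.
move/eqP: hT; rewrite !mulf_eq0 => /orP [/orP [/eqP hr | /eqP hr3] | /eqP hq].
-
  rewrite hr in e2 e3 e4 e6.
  have hs : s * (s + A) = 0 by rewrite -[RHS]oppr0 -e2 /A; ring.
  have ht : t * (t + B) = 0 by rewrite -[RHS]oppr0 -e6 /B; ring.
  move: hs; move/eqP; rewrite mulf_eq0; case/orP => /eqP hs.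
  + rewrite hs in e1 e3 e4.
    have htA : t * A = 0 by rewrite -[RHS]oppr0 -e4 /A; ring.
    move: htA; move/eqP; rewrite mulf_eq0; case/orP => /eqP htA.
    * rewrite htA in e3; apply: (scal (w:=w) hz hu3); first by rewrite e1; ring.
      by rewrite e3; ring.
    * have hu6 : u = -6 by apply/eqP; rewrite -subr_eq0 opprK; apply/eqP.
      move: e1; rewrite (_ : u + 6 + 2 * 0 = 0); last by rewrite mulr0 addr0; exact: htA.
      move/eqP; rewrite mulf_eq0 (negbTE hw) /= => /eqP hv.
      by rewrite hu6; apply/eqP; rewrite -subr_eq0 opprK hv.
  + have hs' : s = - A by apply/eqP; rewrite -subr_eq0 opprK hs.
    rewrite hs' in e1 e3 e4.
    have hAB : A * (t + B) = 0 by rewrite -e4 /A /B; ring.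
    move: hAB; move/eqP; rewrite mulf_eq0; case/orP => /eqP hAB.
    * have hu6 : u = -6 by apply/eqP; rewrite -subr_eq0 opprK; apply/eqP.
      move: e1; rewrite (_ : u + 6 + 2 * - A = 0); last by rewrite hAB oppr0 mulr0 addr0; exact: hAB.
      move/eqP; rewrite mulf_eq0 (negbTE hw) /= => /eqP hv.
      by rewrite hu6; apply/eqP; rewrite -subr_eq0 opprK hv.
    * have ht' : t = - B by apply/eqP; rewrite -subr_eq0 opprK hAB.
      rewrite ht' in e3.
      apply: (scal (w := - w) hz hu3).
        by rewrite mulNr e1 /A; ring.
      by rewrite exprNn -mulrA e3 /A /B; ring.
-
  have hsq : s ^+ 2 + A * s + B = 0.
    rewrite (_ : s ^+ 2 + A * s + B = -(- s * (u + 6) + 3 * r - s ^+ 2) + (3 * r + B)).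
      by rewrite e2 hr3 oppr0 addr0.
    rewrite /A /B; ring.
  have [hu0 | hu0] := eqVneq u 0.
    have h9 : 3 * r + 9 = 0 by rewrite -hr3 /B hu0; ring.
    have hr' : r = -3.
      apply: (mulfI h3); apply/eqP; rewrite -subr_eq0; apply/eqP.
      by rewrite -h9; ring.
    have := noz2 hz (t - 6) h3.
    rewrite (_ : (t - 6) ^+ 2 + (t - 6) * 3 + 3 ^+ 2 = - (r ^+ 3 - t * (u ^+ 2 + 3 * u + 9) - t ^+ 2 - r * t * (u + 6))).
      by rewrite e6 oppr0 eqxx.
    by rewrite hr' hu0; ring.
  have := noz2 hz (s + 3) hu0.
  rewrite (_ : (s + 3) ^+ 2 + (s + 3) * u + u ^+ 2 = s ^+ 2 + A * s + B).
    by rewrite hsq eqxx.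
  rewrite /A /B; ring.
-
  have [hb | hb] := eqVneq (B + u * r) 0.
    have : B * (u - 3) ^+ 2 = 0.
      rewrite (_ : B * _ = u ^+ 2 * (r ^+ 2 + (3 * A - 9) * r + 3 * B)
           - (B + u * r) * (u * r + (3 * u + 9) * u - B)); last by rewrite /A /B; ring.
      by rewrite hq mulr0 hb mul0r subrr.
    by move/eqP; rewrite mulf_eq0 expf_eq0 /= subr_eq0 (negbTE hB) (negbTE hu3).
  have := noz2 hz (3 * r + B) hb.
  rewrite (_ : (3 * r + B) ^+ 2 + (3 * r + B) * (B + u * r) + (B + u * r) ^+ 2 = B * (r ^+ 2 + (3 * A - 9) * r + 3 * B)).
    by rewrite hq mulr0 eqxx.
  rewrite /A /B; ring.
Qed.
End NoZ.

Section C3.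
Variable F : finFieldType.
Hypothesis h3 : (3 : F) = 0.

Lemma z3 (X E Y : F) : X = E + 3 * Y -> E = 0 -> X = 0.
Proof. by move=> -> ->; rewrite h3 mul0r addr0. Qed.

Lemma c3scal (u v w : F) : u != 0 -> w * v = u -> w ^+ 3 * v ^+ 2 = u ^+ 2 -> v = u.
Proof.
move=> hu e1 e3.
have : u ^+ 2 * (w - 1) = 0 by rewrite mulrBr mulr1 -{1}e1 -e3; ring.
move/eqP; rewrite mulf_eq0 expf_eq0 (negbTE hu) /= subr_eq0 => /eqP hw.
by move: e1; rewrite hw mul1r.
Qed.

Lemma c3_iso (u v : F) : u ^+ 3 != 27 -> hess_iso u v -> v = u.
Proof.
move=> hu /hessE [w [r [s [t [hw [e1 e2 e3 e4 e6]]]]]].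
have h27 : (27 : F) = 0 by rewrite (_ : 27 = 3 * 9 :> F); [rewrite h3 mul0r | ring].
have hu0 : u != 0 by apply: contra hu => /eqP ->; rewrite h27 expr0n.
have hs : s * (u + s) = 0.
  apply: (z3 (E := - (- s * (u + 6) + 3 * r - s ^+ 2)) (Y := r - 2 * s)); first by ring.
  by rewrite e2 oppr0.
move/eqP: hs; rewrite mulf_eq0 => /orP [/eqP hs | /eqP hs].
- rewrite hs in e1 e3 e4 e6.
  have htu : t * u = 0.
    apply: (z3 (E := - (- 0 * (u ^+ 2 + 3 * u + 9) - (t + r * 0) * (u + 6) + 3 * r ^+ 2 - 2 * 0 * t))
      (Y := r ^+ 2 - 2 * t)); first by ring.
    by rewrite e4 oppr0.
  move/eqP: htu; rewrite mulf_eq0 (negbTE hu0) orbF => /eqP ht.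
  rewrite ht in e3 e6.
  have hr : r ^+ 3 = 0 by rewrite -e6; ring.
  move/eqP: hr; rewrite expf_eq0 /= => /eqP hr.
  rewrite hr in e3.
  apply: (c3scal (w := w) hu0).
    by apply: (@eq_from0 _ _ _ (- (w * (v + 6) - (u + 6 + 2 * 0)) + 3 * (2 * w - 2))); [ring | rewrite e1 subrr oppr0 h3 mul0r addr0].
  by apply: (@eq_from0 _ _ _ (- (w ^+ 3 * (v ^+ 2 + 3 * v + 9) - (u ^+ 2 + 3 * u + 9 + 0 * (u + 6) + 2 * 0)) + 3 * (w ^+ 3 * (v + 3) - u - 3))); [ring | rewrite e3 subrr oppr0 h3 mul0r addr0].
- have hs' : s = - u by apply/eqP; rewrite -addr_eq0 addrC hs.
  rewrite hs' in e1 e3 e4 e6.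
  have hut : u * (u ^+ 2 + r * u + t) = 0.
    apply: (z3 (E := - s * (u ^+ 2 + 3 * u + 9) - (t + r * s) * (u + 6) + 3 * r ^+ 2 - 2 * s * t)
      (Y := - (u ^+ 2 + 3 * u - 2 * t + 2 * r * u + r ^+ 2))); first by rewrite hs'; ring.
    by rewrite hs' e4.
  move/eqP: hut; rewrite mulf_eq0 (negbTE hu0) /= => /eqP hut.
  have ht : t = - u ^+ 2 - r * u by apply/eqP; rewrite -subr_eq0; apply/eqP; rewrite -hut; ring.
  rewrite ht in e3 e6.
  have hr : r ^+ 3 = 0.
    apply: (z3 (E := r ^+ 3 - (- u ^+ 2 - r * u) * (u ^+ 2 + 3 * u + 9) - (- u ^+ 2 - r * u) ^+ 2 - r * (- u ^+ 2 - r * u) * (u + 6))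
      (Y := - (u ^+ 2 + r * u) * (u + 3 + 2 * r))); first by ring.
    exact: e6.
  move/eqP: hr; rewrite expf_eq0 /= => /eqP hr.
  rewrite hr in e3.
  apply: (c3scal (w := - w) hu0).
    by apply: (@eq_from0 _ _ _ ((w * (v + 6) - (u + 6 + 2 * - u)) + 3 * (2 - 2 * w))); [ring | rewrite e1 subrr h3 mul0r addr0].
  by apply: (@eq_from0 _ _ _ ((w ^+ 3 * (v ^+ 2 + 3 * v + 9) - (u ^+ 2 + 3 * u + 9 + 0 * (u + 6) + 2 * (- u ^+ 2 - 0 * u))) - 3 * (w ^+ 3 * (v + 3) - u - 3))); [ring | rewrite e3 subrr h3 mul0r subr0].
Qed.
End C3.

Section Om.
Variable F : finFieldType.
Variable o : F.
Hypothesis hom : o ^+ 2 + o + 1 = 0.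
Hypothesis h3 : (3 : F) != 0.

Lemma omeq (X Y Q : F) : X - Y = (o ^+ 2 + o + 1) * Q -> X = Y.
Proof. by rewrite hom mul0r => /eqP; rewrite subr_eq0 => /eqP. Qed.

Lemma om3 : o ^+ 3 = 1.
Proof. by apply: (omeq (Q := o - 1)); ring. Qed.

Lemma om_neq0 : o != 0.
Proof. apply/eqP => h0; move: hom; rewrite h0 expr0n /= !add0r => /eqP; by rewrite oner_eq0. Qed.

Lemma om_neq1 : o != 1.
Proof.
apply: contra h3 => /eqP o1; move: hom; rewrite o1 => <-; apply/eqP; ring.
Qed.

Lemma n9 : (9 : F) != 0.
Proof. by rewrite (_ : 9 = 3 * 3 :> F) ?mulf_neq0 //; ring. Qed.
Lemma n27 : (27 : F) != 0.
Proof. by rewrite (_ : 27 = 3 * 9 :> F) ?mulf_neq0 ?n9 //; ring. Qed.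

Lemma n81 : (81 : F) != 0.
Proof. by rewrite (_ : 81 = 9 * 9 :> F) ?mulf_neq0 ?n9 //; ring. Qed.

Lemma om12 : 1 + 2 * o != 0.
Proof.
apply: contra h3 => /eqP h; apply/eqP.
rewrite (_ : 3 = - (1 + 2 * o) ^+ 2 + 4 * (o ^+ 2 + o + 1)); last by ring.
by rewrite h hom; ring.
Qed.

Definition tau (x : F) := 3 * (x + 6) / (x - 3).

Lemma sig_iso x : hess_iso x (o * x).
Proof.
apply: (@hessI _ x (o * x) (o ^+ 2) ((-3+3*o)+(-2-o)*x) (-6-3*o) ((9-9*o)+(6+3*o)*x)).
  by rewrite expf_neq0 // om_neq0.
split.
- by apply: (omeq (Q := (o*x - x + 6))); ring.
- by apply: (omeq (Q := (- 9))); ring.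
- by apply: (omeq (Q := (o^+6*x^+2 - o^+5*x^+2 + 3*o^+5*x - 3*o^+4*x + 9*o^+4 + o^+3*x^+2 - 9*o^+3 - o^+2*x^+2 + 3*o^+2*x - 3*o*x + 9*o + x^+2 - 9))); ring.
- by apply: (omeq (Q := (- 9*x + 27))); ring.
- by apply: (omeq (Q := (- o*x^+3 + 9*o*x^+2 - 27*o*x + 27*o - 2*x^+3 + 9*x^+2 - 27))); ring.
Qed.

Lemma tau_iso x : x != 3 -> hess_iso x (tau x).
Proof.
move=> hx; have hx3 : x - 3 != 0 by rewrite subr_eq0.
have n9 := n9; have n27 := n27; have n81 := n81.
apply: (@hessI _ x (tau x) ((1 + 2 * o) * (3 - x) / 9) (- (x ^+ 2 + 3 * x + 9) / 3)
   (-3 + o ^+ 2 * x) ((3 - 3 * o) + 3 * x + x ^+ 2 + (2 + o) * x ^+ 3 / 9)).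
  rewrite mulf_neq0 ?invr_neq0 // mulf_neq0 ?om12 //.
  by rewrite subr_eq0 eq_sym.
rewrite /tau; split.
- apply: (omeq (Q := (- 2*x^+2 + 6*x) / (x - 3))); field; by rewrite ?hx3 ?n9 ?n27 ?n81 ?h3 ?oner_neq0.
- apply: (omeq (Q := (- o^+2*x^+2 + o*x^+2 - x^+2) / 1)); field; by rewrite ?hx3 ?n9 ?n27 ?n81 ?h3 ?oner_neq0.
- apply: (omeq (Q := (- (8/27)*o*x^+5 + (16/9)*o*x^+4 - (8/3)*o*x^+3 + 8*o*x^+2 - 48*o*x + 72*o - (4/27)*x^+5 + (8/9)*x^+4 - (4/3)*x^+3 + 4*x^+2 - 24*x + 36) / (x - 3) ^+ 2)); field; by rewrite ?hx3 ?n9 ?n27 ?n81 ?h3 ?oner_neq0.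
- apply: (omeq (Q := (- (2/9)*o*x^+4 + 6*o*x + (1/9)*x^+4 - 3*x) / 1)); field; by rewrite ?hx3 ?n9 ?n27 ?n81 ?h3 ?oner_neq0.
- apply: (omeq (Q := (- (1/81)*x^+6 + (2/3)*x^+3 - 9) / 1)); field; by rewrite ?hx3 ?n9 ?n27 ?n81 ?h3 ?oner_neq0.
Qed.

Lemma om6 : o ^+ 6 = 1.
Proof. by rewrite (_ : 6%N = (3 * 2)%N) // exprM om3 expr1n. Qed.

Lemma cubeM (x : F) : (o * x) ^+ 3 = x ^+ 3.
Proof. by rewrite exprMn om3 mul1r. Qed.
Lemma cubeM2 (x : F) : (o ^+ 2 * x) ^+ 3 = x ^+ 3.
Proof. by rewrite exprMn -exprM mulnC exprM om3 expr1n mul1r. Qed.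

Lemma rho_om (x : F) : rho (o * x) = o * rho x.
Proof. by rewrite /rho cubeM !mulrA. Qed.

Lemma tau_cube (x : F) : x != 3 -> tau x ^+ 3 - 27 = 729 * (x ^+ 2 + 3 * x + 9) / (x - 3) ^+ 3.
Proof.
move=> hx; have hx3 : x - 3 != 0 by rewrite subr_eq0.
by rewrite /tau; field; rewrite hx3.
Qed.

Lemma B_neq0 (x : F) : x ^+ 3 != 27 -> x ^+ 2 + 3 * x + 9 != 0.
Proof.
move=> hx; apply: contra hx => /eqP hB; apply/eqP.
by rewrite (_ : x ^+ 3 = (x - 3) * (x ^+ 2 + 3 * x + 9) + 27); [rewrite hB mulr0 add0r | ring].
Qed.

Lemma n3 (x : F) : x ^+ 3 != 27 -> x != 3.
Proof. by apply: contra => /eqP ->; apply/eqP; ring. Qed.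

Lemma n729 : (729 : F) != 0.
Proof. by rewrite (_ : 729 = 27 * 27 :> F) ?mulf_neq0 ?n27 //; ring. Qed.

Lemma tauP (x : F) : x ^+ 3 != 27 -> tau x ^+ 3 != 27.
Proof.
move=> hx; have hx3 : x - 3 != 0 by rewrite subr_eq0 n3.
rewrite -subr_eq0 tau_cube ?n3 //.
by rewrite mulf_neq0 ?invr_neq0 ?expf_neq0 // mulf_neq0 ?n729 ?B_neq0.
Qed.

Lemma rho_tau (x : F) : x ^+ 3 != 27 -> rho (tau x) = rho x.
Proof.
move=> hx; have hx3 : x - 3 != 0 by rewrite subr_eq0 n3.
have hB := B_neq0 hx.
have hx27 : x ^+ 3 - 27 != 0 by rewrite subr_eq0.
rewrite /rho tau_cube ?n3 //.
rewrite /tau; field.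
by rewrite hx27 hx3 hB n729.
Qed.

Lemma solve1 (v N D : F) : D != 0 -> v * D - N = 0 -> v = N / D.
Proof. by move=> hD /eqP; rewrite subr_eq0 => /eqP <-; rewrite mulfK. Qed.

Lemma fac (u v : F) : u ^+ 3 != 27 -> v ^+ 3 != 27 -> rho v = rho u ->
  [\/ v = u, v = tau u, v = o * tau (o ^+ 2 * u) | v = o ^+ 2 * tau (o * u)].
Proof.
move=> hu hv e.
have hu' : u ^+ 3 - 27 != 0 by rewrite subr_eq0.
have hv' : v ^+ 3 - 27 != 0 by rewrite subr_eq0.
have hN : v * (v ^+ 3 + 216) * (u ^+ 3 - 27) - u * (u ^+ 3 + 216) * (v ^+ 3 - 27) = 0.
  by move: e; rewrite /rho => /eqP; rewrite eqr_div // => /eqP ->; rewrite subrr.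
have hF : (v - u) * (v * (u - 3) - 3 * (u + 6)) * (v * (o ^+ 2 * u - 3) - o * (3 * (o ^+ 2 * u + 6)))
     * (v * (o * u - 3) - o ^+ 2 * (3 * (o * u + 6))) = 0.
  rewrite -hN; apply/esym; apply: (omeq (Q := (u^+4*v^+3*o - u^+4*v^+3 - 3*u^+4*v^+2*o^+3 + 9*u^+4*v*o^+4 - 27*u^+4*o^+4 + 27*u^+4*o^+3 - 27*u^+4*o + 27*u^+4 - u^+3*v^+4*o + u^+3*v^+4 + 3*u^+3*v^+3*o^+3 - 3*u^+3*v^+3*o - 9*u^+3*v^+2*o^+4 + 9*u^+3*v^+2*o^+3 - 18*u^+3*v^+2*o^+2 + 9*u^+3*v^+2*o + 108*u^+3*v*o^+3 + 54*u^+3*v*o^+2 - 216*u^+3*v*o + 216*u^+3*v - 162*u^+3*o^+4 + 3*u^+2*v^+4*o - 9*u^+2*v^+3*o^+3 + 18*u^+2*v^+3*o^+2 - 9*u^+2*v^+3*o + 9*u^+2*v^+3 + 27*u^+2*v^+2*o^+4 - 135*u^+2*v^+2*o^+3 + 135*u^+2*v^+2*o - 27*u^+2*v^+2 + 162*u^+2*v*o^+4 - 162*u^+2*v*o^+3 + 324*u^+2*v*o^+2 - 162*u^+2*v*o - 972*u^+2*o^+3 - 9*u*v^+4 - 54*u*v^+3*o^+2 + 108*u*v^+3*o - 216*u*v^+3 + 162*u*v^+2*o^+3 - 324*u*v^+2*o^+2 + 162*u*v^+2*o - 162*u*v^+2 + 972*u*v*o^+3 - 972*u*v*o - 5832*u*o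 + 5832*u + 162*v^+3 + 972*v^+2*o + 5832*v*o - 5832*v))); ring.
have d1 : u - 3 != 0 by rewrite subr_eq0 n3.
have d2 : o ^+ 2 * u - 3 != 0 by rewrite subr_eq0 n3 // cubeM2.
have d3 : o * u - 3 != 0 by rewrite subr_eq0 n3 // cubeM.
move/eqP: hF; rewrite !mulf_eq0 => /orP [/orP [/orP [h1|h2]|h3']|h4].
- by constructor 1; apply/eqP; rewrite -subr_eq0.
- by constructor 2; rewrite /tau; apply: solve1 => //; apply/eqP.
- by constructor 3; rewrite /tau mulrA; apply: solve1 => //; apply/eqP.
- by constructor 4; rewrite /tau mulrA; apply: solve1 => //; apply/eqP.
Qed.

Lemma cube_roots (y z : F) : y ^+ 3 = z ^+ 3 -> [\/ y = z, y = o * z | y = o ^+ 2 * z].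
Proof.
move=> e.
have hF : (y - z) * (y - o * z) * (y - o ^+ 2 * z) = 0.
  rewrite (_ : 0 = y ^+ 3 - z ^+ 3); last by rewrite e subrr.
  apply/esym; apply: (omeq (Q := (- o*y*z^+2 + o*z^+3 + y^+2*z - z^+3))); ring.
move/eqP: hF; rewrite !mulf_eq0 !subr_eq0 => /orP [/orP [/eqP h|/eqP h]|/eqP h].
- by constructor 1.
- by constructor 2.
- by constructor 3.
Qed.

Definition Qall (x : F) := x ^+ 6 - 540 * x ^+ 3 - 5832.

Lemma pairQ (E c Qz M : F) : E = 0 -> E - c * Qz = (o ^+ 2 + o + 1) * M -> c != 0 -> Qz = 0.
Proof.
move=> hE h hc; have := omeq h; rewrite hE => /esym/eqP.
by rewrite mulf_eq0 (negbTE hc) => /eqP.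
Qed.

Lemma Qall1 (x : F) : x ^+ 2 - 6 * x - 18 = 0 -> Qall x = 0.
Proof.
move=> h; rewrite /Qall (_ : _ - _ = (x ^+ 2 - 6 * x - 18) * (x^+4 + 6*x^+3 + 54*x^+2 - 108*x + 324)).
  by rewrite h mul0r.
ring.
Qed.

Lemma Qallw (x : F) : x ^+ 2 - 6 * o * x - 18 * o ^+ 2 = 0 -> Qall x = 0.
Proof.
move=> h; rewrite (_ : Qall x = (x ^+ 2 - 6 * o * x - 18 * o ^+ 2) * (6*o*x^+3 - 54*o*x^+2 + 324*o + x^+4 - 54*x^+2 - 108*x)).
  by rewrite h mul0r.
apply: (omeq (Q := (108*o*x^+3 - 972*o*x^+2 + 5832*o + 54*x^+4 - 432*x^+3 - 5832))); rewrite /Qall; ring.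
Qed.

Lemma Qallw2 (x : F) : x ^+ 2 - 6 * o ^+ 2 * x - 18 * o = 0 -> Qall x = 0.
Proof.
move=> h; rewrite (_ : Qall x = (x ^+ 2 - 6 * o ^+ 2 * x - 18 * o) * (- 6*o*x^+3 + 54*o*x^+2 - 324*o + x^+4 - 6*x^+3 - 108*x - 324)).
  by rewrite h mul0r.
apply: (omeq (Q := (- 36*o*x^+4 + 324*o*x^+3 - 1944*o*x + 6*x^+5 - 432*x^+3 + 324*x^+2 - 5832))); rewrite /Qall; ring.
Qed.

Lemma cross (a b Na Da Nb Db : F) : Da != 0 -> Db != 0 -> a = Na / Da -> b = Nb / Db ->
  a = b -> Na * Db - Nb * Da = 0.
Proof.
move=> ha hb -> -> /eqP; rewrite eqr_div // => /eqP ->; by rewrite subrr.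
Qed.

Lemma on1 : o + 1 != 0.
Proof. apply/eqP => h; move: hom; rewrite (_ : o = -1); last by rewrite -(addrK 1 o) h sub0r.
by move/eqP; rewrite (_ : (-1) ^+ 2 + -1 + 1 = 1 :> F) ?oner_eq0 //; ring. Qed.

Lemma om1 : o - 1 != 0.
Proof. by rewrite subr_eq0 om_neq1. Qed.

Lemma fiber_uniq (x : F) : x ^+ 3 != 27 -> Qall x != 0 ->
  uniq [:: x; tau x; o * tau (o ^+ 2 * x); o ^+ 2 * tau (o * x)].
Proof.
move=> hx hQ.
have d1 : x - 3 != 0 by rewrite subr_eq0 n3.
have d2 : o ^+ 2 * x - 3 != 0 by rewrite subr_eq0 n3 // cubeM2.
have d3 : o * x - 3 != 0 by rewrite subr_eq0 n3 // cubeM.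
have d0 : (1 : F) != 0 := oner_neq0 _.
have f0 : x = x / 1 by rewrite divr1.
have f1 : tau x = (3 * (x + 6)) / (x - 3) by [].
have f2 : o * tau (o ^+ 2 * x) = (o * (3 * (o ^+ 2 * x + 6))) / (o ^+ 2 * x - 3) by rewrite /tau mulrA.
have f3 : o ^+ 2 * tau (o * x) = (o ^+ 2 * (3 * (o * x + 6))) / (o * x - 3) by rewrite /tau mulrA.
have no := om_neq0; have o1 := om1; have p1 := on1.
have c12 : 3 * o ^+ 2 - 3 != 0.
  by rewrite (_ : 3 * o ^+ 2 - 3 = 3 * (o - 1) * (o + 1)); [rewrite !mulf_neq0 | ring].
have c13 : 3 * o - 3 != 0.
  by rewrite (_ : 3 * o - 3 = 3 * (o - 1)); [rewrite !mulf_neq0 | ring].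
have c23 : - 3 * o ^+ 2 + 3 * o != 0.
  by rewrite (_ : - 3 * o ^+ 2 + 3 * o = - (3 * o * (o - 1))); [rewrite oppr_eq0 !mulf_neq0 | ring].
have n01 : x != tau x.
  apply/eqP => h; move/eqP: hQ; apply; apply: Qall1.
  by apply: (pairQ (cross d0 d1 f0 f1 h) (c := 1) (M := 0) _ (oner_neq0 _)); ring.
have n02 : x != o * tau (o ^+ 2 * x).
  apply/eqP => h; move/eqP: hQ; apply; apply: Qallw.
  by apply: (pairQ (cross d0 d2 f0 f2 h) (c := o ^+ 2) (M := (18*o^+2 + 3*o*x - 18*o - 3*x)) _ (expf_neq0 _ no)); ring.
have n03 : x != o ^+ 2 * tau (o * x).
  apply/eqP => h; move/eqP: hQ; apply; apply: Qallw2.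
  by apply: (pairQ (cross d0 d3 f0 f3 h) (c := o) (M := (3*o*x - 3*x)) _ no); ring.
have n12 : tau x != o * tau (o ^+ 2 * x).
  apply/eqP => h; move/eqP: hQ; apply; apply: Qallw2.
  by apply: (pairQ (cross d1 d2 f1 f2 h) (c := 3 * o ^+ 2 - 3) (M := (18*o^+2*x - 3*o*x^+2 - 9*o*x + 54*o + 3*x^+2 - 9*x - 54)) _ c12); ring.
have n13 : tau x != o ^+ 2 * tau (o * x).
  apply/eqP => h; move/eqP: hQ; apply; apply: Qallw.
  by apply: (pairQ (cross d1 d3 f1 f3 h) (c := 3 * o - 3) (M := (- 3*o*x^+2 + 9*o*x + 54*o + 3*x^+2 - 9*x - 54)) _ c13); ring.
have n23 : o * tau (o ^+ 2 * x) != o ^+ 2 * tau (o * x).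
  apply/eqP => h; move/eqP: hQ; apply; apply: Qall1.
  by apply: (pairQ (cross d2 d3 f2 f3 h) (c := - 3 * o ^+ 2 + 3 * o) (M := (- 3*o^+3*x^+2 + 6*o^+2*x^+2 - 18*o^+2*x - 3*o*x^+2 + 18*o*x)) _ c23); ring.
by rewrite /= !inE !negb_or n01 n02 n03 n12 n13 n23.
Qed.

Lemma two_fixed (h2 : (2 : F) != 0) (x : F) : x ^+ 3 != 27 ->
  x = tau x -> x = o * tau (o ^+ 2 * x) -> False.
Proof.
move=> hx h1 h2'.
have d1 : x - 3 != 0 by rewrite subr_eq0 n3.
have d2 : o ^+ 2 * x - 3 != 0 by rewrite subr_eq0 n3 // cubeM2.
have d0 : (1 : F) != 0 := oner_neq0 _.
have f0 : x = x / 1 by rewrite divr1.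
have f1 : tau x = (3 * (x + 6)) / (x - 3) by [].
have f2 : o * tau (o ^+ 2 * x) = (o * (3 * (o ^+ 2 * x + 6))) / (o ^+ 2 * x - 3) by rewrite /tau mulrA.
have no := om_neq0; have o1 := om1.
have q1 : x ^+ 2 - 6 * x - 18 = 0.
  by apply: (pairQ (cross d0 d1 f0 f1 h1) (c := 1) (M := 0) _ (oner_neq0 _)); ring.
have qw : x ^+ 2 - 6 * o * x - 18 * o ^+ 2 = 0.
  by apply: (pairQ (cross d0 d2 f0 f2 h2') (c := o ^+ 2) (M := (18*o^+2 + 3*o*x - 18*o - 3*x)) _ (expf_neq0 _ no)); ring.
have h6 : (6 : F) != 0 by rewrite (_ : 6 = 2 * 3 :> F) ?mulf_neq0 //; ring.
have hx' : x - 3 * o ^+ 2 = 0.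
  have : 6 * (o - 1) * (x - 3 * o ^+ 2) = 0.
    have e : 6 * (o - 1) * (x - 3 * o ^+ 2) = (x ^+ 2 - 6 * x - 18) - (x ^+ 2 - 6 * o * x - 18 * o ^+ 2).
      by apply: (omeq (Q := (- 18*o + 18))); ring.
    by rewrite e q1 qw subrr.
  by move/eqP; rewrite !mulf_eq0 (negbTE h6) (negbTE o1) /= => /eqP.
have : 27 * o = 0.
  have e : x ^+ 2 - 6 * x - 18 = (x - 3 * o ^+ 2) * (x + 3 * o ^+ 2 - 6) + 27 * o.
    by apply: (omeq (Q := (9*o^+2 - 9*o - 18))); ring.
  by move: e; rewrite q1 hx' mul0r add0r => <-.
by move/eqP; rewrite mulf_eq0 (negbTE n27) (negbTE no).
Qed.

Lemma Qall_c2 (h2 : (2 : F) = 0) (x : F) : Qall x = 0 -> x = 0.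
Proof.
move=> h; have : x ^+ 6 = 0.
  have e : Qall x = x ^+ 6 - 2 * (270 * x ^+ 3 + 2916) by rewrite /Qall; ring.
  by rewrite e h2 mul0r subr0 in h.
by move/eqP; rewrite expf_eq0 /= => /eqP.
Qed.

Lemma iso_om2 (u : F) : hess_iso u (o ^+ 2 * u).
Proof.
apply: (hess_trans (sig_iso u)).
by rewrite (_ : o ^+ 2 * u = o * (o * u)); [exact: sig_iso | rewrite mulrA -expr2].
Qed.

Lemma iso_fib (u v : F) : u ^+ 3 != 27 -> v ^+ 3 != 27 -> rho v = rho u -> hess_iso u v.
Proof.
move=> hu hv e; case: (fac hu hv e) => ->.
- exact: hess_refl.
- exact: (tau_iso (n3 hu)).
- apply: (hess_trans (iso_om2 u)); apply: (hess_trans (tau_iso _)); last exact: sig_iso.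
  by rewrite n3 // cubeM2.
- apply: (hess_trans (sig_iso u)); apply: (hess_trans (tau_iso _)); last exact: iso_om2.
  by rewrite n3 // cubeM.
Qed.

Lemma rho_om2 (x : F) : rho (o ^+ 2 * x) = o ^+ 2 * rho x.
Proof. by rewrite expr2 -mulrA !rho_om mulrA. Qed.

Lemma class_eq (u v : F) : u ^+ 3 != 27 -> v ^+ 3 != 27 ->
  hess_iso u v = (rho v ^+ 3 == rho u ^+ 3).
Proof.
move=> hu hv; apply/idP/eqP => [h | h]; first by rewrite (iso_rho hu hv h).
case: (cube_roots h) => e.
- exact: iso_fib.
- have e' : rho (o ^+ 2 * v) = rho u by rewrite rho_om2 e mulrA -exprSr om3 mul1r.
  have := iso_fib hu _ e'; rewrite cubeM2 => /(_ hv) h'.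
  apply: (hess_trans h'); rewrite {2}(_ : v = o * (o ^+ 2 * v)); first exact: sig_iso.
  by rewrite mulrA -exprS om3 mul1r.
- have e' : rho (o * v) = rho u by rewrite rho_om e mulrA -exprS om3 mul1r.
  have := iso_fib hu _ e'; rewrite cubeM => /(_ hv) h'.
  apply: (hess_trans h'); rewrite {2}(_ : v = o ^+ 2 * (o * v)); first exact: iso_om2.
  by rewrite mulrA -exprSr om3 mul1r.
Qed.

Notation PP := (hess_params F).

Lemma inP (u : F) : (u \in PP) = (u ^+ 3 != 27).
Proof. by rewrite inE. Qed.

Lemma IH_eq : I_H F = #|[set y ^+ 3 | y in (@rho F) @: PP]|.
Proof.
rewrite /I_H.
have -> : [set [set v in PP | hess_iso u v] | u in PP] =
          [set [set v in PP | rho v ^+ 3 == y] | y in [set rho u ^+ 3 | u in PP]].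
  rewrite -imset_comp; apply: eq_in_imset => u hu /=; apply/setP => v; rewrite !inE.
  case hv: (v ^+ 3 != 27) => //=; rewrite class_eq //; by rewrite -inP.
rewrite card_in_imset; last first.
  move=> y1 y2 /imsetP [u1 hu1 ->] /imsetP [u2 hu2 ->] /setP e.
  by have := e u1; rewrite !inE -inP hu1 eqxx /= => /esym/eqP.
by rewrite -imset_comp.
Qed.

Notation YY := ((@rho F) @: PP).

Lemma P0 : (0 : F) \in PP.
Proof. by rewrite inP expr0n /= eq_sym n27. Qed.

Lemma Y0 : (0 : F) \in YY.
Proof. by apply/imsetP; exists 0; [exact: P0 | rewrite /rho !mul0r]. Qed.

Lemma Yom (y : F) : y \in YY -> o * y \in YY.
Proof.
case/imsetP=> u hu ->; apply/imsetP; exists (o * u); last by rewrite rho_om.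
by rewrite inP cubeM -inP.
Qed.


Lemma cube_count : (#|YY| + 2 = 3 * #|[set y ^+ 3 | y in YY]|)%N.
Proof.
set Z := [set y ^+ 3 | y in YY].
have part : (#|YY| = \sum_(z in Z) #|[set y in YY | y ^+ 3 == z]|)%N.
  rewrite -sum1_card (partition_big_imset (fun y => y ^+ 3)) /=.
  by apply: eq_bigr => z _; rewrite -sum1_card; apply: eq_bigl => y; rewrite inE.
have g0 : #|[set y in YY | y ^+ 3 == 0]| = 1%N.
  rewrite (_ : [set y in YY | y ^+ 3 == 0] = [set 0]) ?cards1 //.
  apply/setP => y; rewrite !inE; apply/andP/eqP => [[_ /eqP] | ->].
    by move/eqP; rewrite expf_eq0 /= => /eqP.
  by rewrite Y0 expr0n.
have no := om_neq0; have o1 := om_neq1.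
have gz : forall z, z \in Z -> z != 0 -> #|[set y in YY | y ^+ 3 == z]| = 3%N.
  move=> z /imsetP [y0 hy0 ->] hz.
  have hy : y0 != 0 by apply: contra hz => /eqP ->; rewrite expr0n.
  have a1 : y0 != o * y0.
    by apply/eqP => h; move: o1; rewrite -(mulIf hy (etrans (mul1r _) h)) eqxx.
  have a2 : y0 != o ^+ 2 * y0.
    apply/eqP => h; have e := mulIf hy (etrans (mul1r _) h).
    move: (om3); rewrite exprS -e mulr1 => e1; by move: o1; rewrite e1 eqxx.
  have a3 : o * y0 != o ^+ 2 * y0.
    apply/eqP => h; have e := mulIf hy h; move: o1; rewrite expr2 in e.
    by rewrite -(mulfI no (etrans (mulr1 _) e)) eqxx.
  rewrite (_ : [set y in YY | y ^+ 3 == y0 ^+ 3] = [set y in [:: y0; o * y0; o ^+ 2 * y0]]).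
    by rewrite cardsE; apply/card_uniqP; rewrite /= !inE negb_or a1 a2 a3.
  apply/setP => y; rewrite !inE; apply/andP/idP => [[_ /eqP /cube_roots] | h].
    by case=> ->; rewrite eqxx ?orbT.
  have Y1 := Yom hy0; have Y2 := Yom Y1.
  rewrite mulrA -expr2 in Y2.
  by move: h => /or3P [] /eqP ->; split; rewrite // ?cubeM ?cubeM2.
have Z0 : (0 : F) \in Z by apply/imsetP; exists 0; [exact: Y0 | rewrite expr0n].
rewrite part (bigD1 0) //= g0.
rewrite (eq_bigr (fun _ => 3%N)); last by move=> z /andP [hz hz0]; rewrite gz.
rewrite sum_nat_cond_const (cardsD1 0 Z) Z0.
rewrite (_ : [set x | (x \in Z) && (x != 0)] = Z :\ 0).
  by rewrite /=; set k := #|Z :\ 0|; lia.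
by apply/setP => x; rewrite !inE andbC.
Qed.

Definition fib (y : F) := [set v in PP | rho v == y].
Definition Fx := [set x in PP | Qall x == 0].

Lemma fibL (u : F) : u \in PP ->
  fib (rho u) = [set v in [:: u; tau u; o * tau (o ^+ 2 * u); o ^+ 2 * tau (o * u)]].
Proof.
rewrite inP => hu; apply/setP => v; rewrite !inE.
have t1 := tauP hu.
have t2 : (tau (o ^+ 2 * u)) ^+ 3 != 27 by apply: tauP; rewrite cubeM2.
have t3 : (tau (o * u)) ^+ 3 != 27 by apply: tauP; rewrite cubeM.
have r2 : rho (o * tau (o ^+ 2 * u)) = rho u.
  by rewrite rho_om rho_tau ?cubeM2 // rho_om2 mulrA -exprS om3 mul1r.
have r3 : rho (o ^+ 2 * tau (o * u)) = rho u.
  by rewrite rho_om2 rho_tau ?cubeM // rho_om mulrA -exprSr om3 mul1r.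
apply/andP/idP => [[hv /eqP e] | ].
  by case: (fac hu hv e) => ->; rewrite eqxx ?orbT.
move=> /or4P [] /eqP ->.
- by rewrite hu eqxx.
- by rewrite t1 rho_tau // eqxx.
- by rewrite cubeM t2 r2 eqxx.
- by rewrite cubeM2 t3 r3 eqxx.
Qed.

Lemma fib_le4 (u : F) : u \in PP -> (#|fib (rho u)| <= 4)%N.
Proof. by move=> hu; rewrite fibL // cardsE card_size. Qed.

Lemma fib_eq4 (u : F) : u \in PP -> Qall u != 0 -> #|fib (rho u)| = 4%N.
Proof.
move=> hu hQ; rewrite fibL // cardsE; apply/card_uniqP.
by apply: fiber_uniq => //; rewrite -inP.
Qed.

Lemma fib_mem (u : F) : u \in PP -> u \in fib (rho u).
Proof. by move=> hu; rewrite inE hu eqxx. Qed.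

Lemma fib_ge2 (h2 : (2 : F) != 0) (u : F) : u \in PP -> (2 <= #|fib (rho u)|)%N.
Proof.
move=> hu; rewrite fibL // cardsE.
have hu' : u ^+ 3 != 27 by rewrite -inP.
have [e1 | e1] := eqVneq u (tau u).
  have e2 : u != o * tau (o ^+ 2 * u) by apply/eqP => e2; apply: (two_fixed h2 hu' e1 e2).
  have c2 : #|[:: u; o * tau (o ^+ 2 * u)]| = 2%N by apply/card_uniqP; rewrite /= inE e2.
  apply: (@leq_trans #|[:: u; o * tau (o ^+ 2 * u)]|); first by rewrite c2.
  by apply: subset_leq_card; apply/subsetP => x; rewrite !inE => /orP [] /eqP ->; rewrite eqxx ?orbT.
have c2 : #|[:: u; tau u]| = 2%N by apply/card_uniqP; rewrite /= inE e1.
apply: (@leq_trans #|[:: u; tau u]|); first by rewrite c2.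
by apply: subset_leq_card; apply/subsetP => x; rewrite !inE => /orP [] /eqP ->; rewrite eqxx ?orbT.
Qed.

Lemma fib_small (u : F) : u \in PP -> #|fib (rho u)| != 4%N -> fib (rho u) \subset Fx.
Proof.
move=> hu h4; apply/subsetP => v hv; move: (hv); rewrite inE => /andP [vP /eqP e].
rewrite inE vP /=; apply/negPn/negP => hQ; move: h4; rewrite -e fib_eq4 //.
Qed.

Lemma tri_uniq (y0 : F) : y0 != 0 -> uniq [:: y0; o * y0; o ^+ 2 * y0].
Proof.
move=> hy; have no := om_neq0; have o1 := om_neq1.
have a1 : y0 != o * y0.
  by apply/eqP => h; move: o1; rewrite -(mulIf hy (etrans (mul1r _) h)) eqxx.
have a2 : y0 != o ^+ 2 * y0.
  apply/eqP => h; have e := mulIf hy (etrans (mul1r _) h).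
  move: (om3); rewrite exprS -e mulr1 => e1; by move: o1; rewrite e1 eqxx.
have a3 : o * y0 != o ^+ 2 * y0.
  apply/eqP => h; have e := mulIf hy h; move: o1; rewrite expr2 in e.
  by rewrite -(mulfI no (etrans (mulr1 _) e)) eqxx.
by rewrite /= !inE negb_or a1 a2 a3.
Qed.

Lemma cardP : (#|PP| + 3 = #|F|)%N.
Proof.
rewrite -(cardsC PP); congr (_ + _)%N.
rewrite (_ : ~: PP = [set x in [:: 3; o * 3; o ^+ 2 * 3]]).
  by apply/esym; rewrite cardsE; apply/card_uniqP; apply: tri_uniq.
apply/setP => x; rewrite !inE negbK; apply/idP/idP.
  move/eqP; rewrite (_ : 27 = 3 ^+ 3 :> F); last by ring.
  by case/cube_roots => ->; rewrite eqxx ?orbT.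
move=> /or3P [] /eqP ->.
- by apply/eqP; ring.
- by rewrite cubeM; apply/eqP; ring.
- by rewrite cubeM2; apply/eqP; ring.
Qed.

Lemma sumP : #|PP| = (\sum_(y in YY) #|fib y|)%N.
Proof.
rewrite -sum1_card (partition_big_imset (@rho F)) /=.
by apply: eq_bigr => y _; rewrite -sum1_card; apply: eq_bigl => v; rewrite /fib inE.
Qed.

Lemma sumFx : #|Fx| = (\sum_(y in YY) #|fib y :&: Fx|)%N.
Proof.
rewrite -sum1_card (partition_big (@rho F) (mem YY)) /=; last first.
  by move=> x; rewrite inE => /andP [hx _]; apply/imsetP; exists x.
apply: eq_bigr => y _; rewrite -sum1_card; apply: eq_bigl => v; rewrite /fib /Fx !inE.
by case: (v ^+ 3 != 27); rewrite /= ?andbF // andbC.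
Qed.

Lemma Fx_le6 : (#|Fx| <= 6)%N.
Proof.
pose c := fun i : nat => if i == 6%N then 1 else if i == 3%N then -540 else if i == 0%N then -5832 else 0 : F.
pose p := \poly_(i < 7) c i.
have hp : forall x, p.[x] = Qall x.
  move=> x; rewrite horner_poly !big_ord_recr big_ord0 /= /c /Qall /=; ring.
have p0 : p != 0.
  apply/eqP => h; have := coef_poly 7 c 6; rewrite -/p h coef0 /= /c /= => /esym/eqP.
  by rewrite oner_eq0.
have ar : all (root p) (enum Fx).
  by apply/allP => x; rewrite mem_enum inE => /andP [_ /eqP hq]; rewrite /root hp hq.
have := max_poly_roots p0 ar (enum_uniq _).
rewrite -cardE => h; have := leq_trans h (size_poly 7 c).
by rewrite ltnS.
Qed.

Lemma Fx_c2 (h2 : (2 : F) = 0) : (#|Fx| <= 1)%N.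
Proof.
rewrite -(cards1 (0 : F)); apply: subset_leq_card; apply/subsetP => x.
by rewrite !inE => /andP [_ /eqP /(Qall_c2 h2) ->].
Qed.

Definition chr2 : bool := (2 : F) == 0.

Lemma four_le (y : F) : y \in YY ->
  (4 <= #|fib y| + (if chr2 then 3 else 1) * #|fib y :&: Fx|)%N.
Proof.
case/imsetP=> u hu ->.
have [h4 | h4] := eqVneq #|fib (rho u)| 4%N; first by rewrite h4.
have := fib_small hu h4 => /setIidPl ->.
rewrite /chr2; case: eqP => [h2 | /eqP h2].
  have : (0 < #|fib (rho u)|)%N by apply/card_gt0P; exists u; apply: fib_mem.
  by move: (#|fib (rho u)|) => n; lia.
by have := fib_ge2 h2 hu; move: (#|fib (rho u)|) => n; lia.
Qed.

Lemma IH_om : I_H F = ((#|F| + 11) %/ 12)%N.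
Proof.
have cc := cube_count; have hP := cardP; rewrite IH_eq.
move: cc; set c := #|[set y ^+ 3 | y in YY]| => cc.
have hk : ((if chr2 then 3 else 1) * #|Fx| <= 6)%N.
  rewrite /chr2; case: eqP => [h2|_]; last by rewrite mul1n Fx_le6.
  by have := Fx_c2 h2; move: #|Fx| => n; lia.
have up : (#|PP| <= 4 * #|YY|)%N.
  rewrite sumP [(4 * _)%N]mulnC -sum_nat_const leq_sum // => y hy.
  by case/imsetP: hy => u hu ->; apply: fib_le4.
have lo : (4 * #|YY| <= #|PP| + (if chr2 then 3 else 1) * #|Fx|)%N.
  rewrite sumP sumFx big_distrr /= -big_split /= [(4 * _)%N]mulnC -sum_nat_const leq_sum // => y hy.
  exact: four_le.
move: (if chr2 then 3 else 1) hk lo => k hk lo.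
move: hk up lo cc hP; move: #|PP| #|YY| #|Fx| #|F| c k => a b d q e f.
lia.
Qed.
End Om.

Section Fin.
Variable F : finFieldType.

Lemma singletons : (forall u v : F, u \in hess_params F -> hess_iso u v -> v = u) ->
  I_H F = #|hess_params F|.
Proof.
move=> h; rewrite /I_H.
rewrite (eq_in_imset (g := fun u => [set u])); last first.
  move=> u hu; apply/setP => v; rewrite !inE; apply/andP/eqP => [[_ hv] | ->].
    exact: (h u v hu hv).
  by split; [rewrite inE in hu | exact: hess_refl].
by rewrite card_imset //; apply: set1_inj.
Qed.

Lemma exists_cuberoot : (#|F| %% 3 == 1)%N -> exists x : F, x != 1 /\ x ^+ 3 = 1.
Proof.
move=> hq.
have d : (3 %| #|[set: {unit F}]|)%N.
  rewrite card_finField_unit.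
  have := divn_eq #|F| 3; rewrite (eqP hq) => ->; rewrite addn1 /=.
  exact: dvdn_mull.
have [x _ ox] := Cauchy (isT : prime 3) d.
exists (val x); split.
  apply/eqP => e; have : x = 1%g by apply: val_inj; rewrite e.
  by move=> x1; move: ox; rewrite x1 order1.
by rewrite -val_unitX -ox expg_order.
Qed.

Lemma cube_omega (x : F) : x != 1 -> x ^+ 3 = 1 -> x ^+ 2 + x + 1 = 0.
Proof.
move=> h1 h3; have : (x - 1) * (x ^+ 2 + x + 1) = 0.
  by rewrite (_ : (x - 1) * _ = x ^+ 3 - 1); [rewrite h3 subrr | ring].
by move/eqP; rewrite mulf_eq0 subr_eq0 (negbTE h1) /= => /eqP.
Qed.

Lemma om_mod (o : F) : o ^+ 2 + o + 1 = 0 -> (3 : F) != 0 -> (#|F| %% 3 = 1)%N.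
Proof.
move=> hom h3; have := expf_card o; rewrite {1}(divn_eq #|F| 3) exprD mulnC exprM (om3 hom) expr1n mul1r.
have := ltn_pmod #|F| (isT : (0 < 3)%N).
have no := om_neq0 hom; have o1 := om_neq1 hom h3.
case: (#|F| %% 3)%N => [|[|[|n]]] // _.
- by move/esym/eqP; rewrite (negbTE o1).
- move=> e; have : o * (o - 1) = 0 by rewrite mulrBr mulr1 -expr2 e subrr.
  by move/eqP; rewrite mulf_eq0 (negbTE no) subr_eq0 (negbTE o1).
Qed.

Lemma card_c3 : (3 : F) = 0 -> (#|hess_params F| + 1 = #|F|)%N.
Proof.
move=> h3; rewrite -(cardsC (hess_params F)) (_ : ~: hess_params F = [set 0]) ?cards1 //.
have h27 : (27 : F) = 0 by rewrite (_ : 27 = 3 * 9 :> F); [rewrite h3 mul0r | ring].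
by apply/setP => x; rewrite !inE negbK h27 expf_eq0.
Qed.

Lemma card_noz (hz : forall z : F, z ^+ 2 + z + 1 != 0) : (#|hess_params F| + 1 = #|F|)%N.
Proof.
rewrite -(cardsC (hess_params F)) (_ : ~: hess_params F = [set 3]) ?cards1 //.
by apply/setP => x; rewrite !inE negbK cube27.
Qed.

End Fin.

Theorem mainTheorem13 (F : finFieldType) :
  I_H F = (if #|F| %% 3 == 1 then (#|F| + 11) %/ 12 else #|F| - 1)%N.
Proof.
have [h3 | h3] := eqVneq (3 : F) 0.
  have nq : (#|F| %% 3 != 1)%N.
    apply/negP => /exists_cuberoot [x [x1 x3]]; move: x1.
    have : (x - 1) ^+ 3 = 0.
      rewrite (_ : (x - 1) ^+ 3 = x ^+ 3 - 1 - 3 * (x ^+ 2 - x)); last by ring.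
      by rewrite x3 h3 mul0r subrr subr0.
    by move/eqP; rewrite expf_eq0 /= subr_eq0 => ->.
  rewrite (negbTE nq) singletons; last by move=> u v; rewrite inE => hu; apply: c3_iso.
  by rewrite -(card_c3 h3) addnK.
case: (boolP [exists z : F, z ^+ 2 + z + 1 == 0]) => [/existsP [o /eqP hom] | hz].
  by rewrite (om_mod hom h3) eqxx; exact: (IH_om hom h3).
have hz' : forall z : F, z ^+ 2 + z + 1 != 0.
  by move=> z; apply: contra hz => hz; apply/existsP; exists z.
have nq : (#|F| %% 3 != 1)%N.
  apply/negP => /exists_cuberoot [x [x1 x3]].
  by move: (hz' x); rewrite cube_omega // eqxx.
rewrite (negbTE nq) singletons; last by move=> u v; rewrite inE => hu; apply: noz_iso.
by rewrite -(card_noz hz') addnK.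
Qed.
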